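(* There exists an infinite word $w$ over the alphabet $\{0,1,2\}$ such that $w^{0\cup1}$, $w^{0\cup2}$ and $w^{1\cup2}$ are all weak abelian periodic, while $w$ itself is not weak abelian periodic.
   Context: For an infinite word $w$ over an alphabet $\Sigma$ and distinct letters $a,b\in\Sigma$, $w^{a\cup b}$ denotes the image of $w$ under the letter-to-letter morphism sending $b\mapsto a$ and $x\mapsto x$ for every $x\neq b$ (i.e. the letters $a$ and $b$ are identified). For a finite word $u$, $|u|_a$ is the number of occurrences of $a$ in $u$ and $\rho_a(u)=|u|_a/|u|$ for nonempty $u$. An infinite word $w$ over $\Sigma$ is weak abelian periodic if $w=v_0v_1v_2\cdots$ with $v_0$ finite and $v_1,v_2,\dots$ nonempty finite words such that $\rho_a(v_i)=\rho_a(v_j)$ for all $a\in\Sigma$ and all $i,j\ge1$. *)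

(* Defs.v *)
From mathcomp Require Import all_boot all_algebra.
Set Implicit Arguments. Unset Strict Implicit. Unset Printing Implicit Defensive.
Import GRing.Theory Num.Theory.

Definition occ (S : eqType) (w : nat -> S) (a : S) (m n : nat) : nat :=
  \sum_(m <= k < n) (w k == a).

Definition rho (S : eqType) (w : nat -> S) (a : S) (m n : nat) : rat :=
  ((occ w a m n)%:R / (n - m)%:R)%R.

(* w = v_0 v_1 v_2 ... with v_0 = w[0, p 0) and v_{i+1} = w[p i, p (i+1)),
   all v_{i+1} nonempty (p strictly increasing) and having the same
   letter frequencies. *)
Definition weak_abelian_periodic (S : eqType) (w : nat -> S) : Prop :=
  exists p : nat -> nat,
    (forall i, p i < p i.+1) /\
    (forall (a : S) (i j : nat), rho w a (p i) (p i.+1) = rho w a (p j) (p j.+1)).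

Definition identify (S : eqType) (a b : S) (w : nat -> S) : nat -> S :=
  fun n => if w n == b then a else w n.

Definition l0 : 'I_3 := @Ordinal 3 0 isT.
Definition l1 : 'I_3 := @Ordinal 3 1 isT.
Definition l2 : 'I_3 := @Ordinal 3 2 isT.

(* Main.v *)
Require Import Defs.
From mathcomp Require Import all_boot all_algebra.
From mathcomp Require Import zify.
Set Implicit Arguments. Unset Strict Implicit. Unset Printing Implicit Defensive.
Import GRing.Theory Num.Theory.

Fixpoint rep (n : nat) (s : seq 'I_3) : seq 'I_3 :=
  if n is n'.+1 then s ++ rep n' s else [::].

Lemma size_rep n s : size (rep n s) = n * size s.
Proof. elim: n => //= n IH; rewrite size_cat IH mulSn. by []. Qed.

Lemma count_rep (a : 'I_3) n s : count_mem a (rep n s) = n * count_mem a s.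
Proof. elim: n => //= n IH; rewrite count_cat IH mulSn. by []. Qed.

Lemma take_rep n j s : size s = 3 -> j <= n -> take (3 * j) (rep n s) = rep j s.
Proof.
move=> Hs; move: n; elim: j => [|j IH] [|n] Hj; rewrite ?muln0 ?take0 //=.
rewrite take_cat Hs ltnNge.
have -> : 3 <= 3 * j.+1 by lia.
by rewrite /= (_ : 3 * j.+1 - 3 = 3 * j) ?IH //; lia.
Qed.

Definition b1 : seq 'I_3 := [:: l1; l1; l2].
Definition b2 : seq 'I_3 := [:: l0; l2; l2].
Definition b3 : seq 'I_3 := [:: l0; l0; l1].
Definition b4 : seq 'I_3 := [:: l0; l0; l0].

Definition st (k : nat) : seq 'I_3 :=
  rep (3 * k) b1 ++ rep (3 * k) b2 ++ rep (3 * k) b3 ++ b4.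

Fixpoint pre (k : nat) : seq 'I_3 :=
  if k is k'.+1 then pre k' ++ st k' else [::].

Definition Sz k := size (pre k).

Lemma size_st k : size (st k) = 27 * k + 3.
Proof. rewrite /st !size_cat !size_rep /=; lia. Qed.

Lemma S_succ k : Sz k.+1 = Sz k + 27 * k + 3.
Proof. rewrite /Sz /= size_cat size_st; lia. Qed.

Lemma S_ge k : k * k <= Sz k.
Proof. elim: k => [|k IH] //; rewrite S_succ; lia. Qed.

Lemma S_le k : Sz k <= 27 * k * k.
Proof. elim: k => [|k IH] //; rewrite S_succ; nia. Qed.

Lemma pre_cat K d : exists s, pre (K + d) = pre K ++ s.
Proof.
elim: d => [|d [s Hs]]; first by exists [::]; rewrite addn0 cats0.
by exists (s ++ st (K + d)); rewrite addnS /= Hs catA.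
Qed.

Definition w (n : nat) : 'I_3 := nth l0 (pre n.+1) n.

Lemma S_gek k : k <= Sz k.
Proof. have := S_ge k; nia. Qed.

Lemma w_nth i K : i < Sz K -> w i = nth l0 (pre K) i.
Proof.
move=> Hi; rewrite /w.
have [s1 H1] := pre_cat K i.+1.
have [s2 H2] := pre_cat i.+1 K.
have H3 : pre (i.+1 + K) = pre (K + i.+1) by rewrite addnC.
rewrite H1 H2 in H3.
have Hi2 : i < size (pre i.+1) by have := S_gek i.+1; rewrite /Sz; lia.
have := congr1 (fun s => nth l0 s i) H3; rewrite !nth_cat Hi2.
by move: Hi; rewrite /Sz => ->.
Qed.

Definition cnt (a : 'I_3) n := occ w a 0 n.

Lemma cnt_take a K n : n <= Sz K -> cnt a n = count_mem a (take n (pre K)).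
Proof.
elim: n => [|n IH] Hn; first by rewrite /cnt /occ big_geq // take0.
have -> : cnt a n.+1 = cnt a n + (w n == a) by rewrite /cnt /occ big_nat_recr.
rewrite IH; last lia.
rewrite (take_nth l0); last by move: Hn; rewrite /Sz.
by rewrite -cats1 count_cat /= addn0 (w_nth (K:=K)).
Qed.


Lemma count_st k :
  [/\ count_mem l0 (st k) = 9 * k + 3, count_mem l1 (st k) = 9 * k &
      count_mem l2 (st k) = 9 * k].
Proof. rewrite /st !count_cat !count_rep /=; split; lia. Qed.

Lemma count_pre k :
  [/\ 3 * count_mem l0 (pre k) = Sz k + 6 * k,
      3 * count_mem l1 (pre k) + 3 * k = Sz k &
      3 * count_mem l2 (pre k) + 3 * k = Sz k].
Proof.
elim: k => [|k [IH0 IH1 IH2]]; first by [].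
have [C0 C1 C2] := count_st k.
rewrite S_succ [pre k.+1]/= !(count_cat _ (pre k)) C0 C1 C2; move: IH0 IH1 IH2; clear.
move: (count_mem l0 (pre k)) (count_mem l1 (pre k)) (count_mem l2 (pre k)) => x y z *; split; lia.
Qed.

Lemma cnt_bd a k j : j <= 9 * k ->
  cnt a (Sz k + 3 * j) = count_mem a (pre k) + count_mem a (take (3 * j) (st k)).
Proof.
move=> Hj; rewrite (@cnt_take a k.+1); last by rewrite S_succ; lia.
rewrite /= take_cat /Sz ltnNge leq_addr /= count_cat; congr (_ + _).
by rewrite addKn.
Qed.

Lemma take_seg1 k j : j <= 3 * k -> take (3 * j) (st k) = rep j b1.
Proof.
move=> Hj; rewrite /st takel_cat ?take_rep // size_rep /=; lia.
Qed.

Lemma take_seg2 k t : t <= 3 * k ->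
  take (3 * (3 * k + t)) (st k) = rep (3 * k) b1 ++ rep t b2.
Proof.
move=> Ht; rewrite /st take_cat size_rep /= ltnNge.
have -> : 3 * k * 3 <= 3 * (3 * k + t) by lia.
rewrite /= (_ : 3 * (3 * k + t) - 3 * k * 3 = 3 * t); last lia.
rewrite takel_cat ?take_rep // size_rep /=; lia.
Qed.

Lemma take_seg3 k t : t <= 3 * k ->
  take (3 * (6 * k + t)) (st k) = rep (3 * k) b1 ++ rep (3 * k) b2 ++ rep t b3.
Proof.
move=> Ht; rewrite /st take_cat size_rep /= ltnNge.
have -> : 3 * k * 3 <= 3 * (6 * k + t) by lia.
rewrite /= (_ : 3 * (6 * k + t) - 3 * k * 3 = 3 * (3 * k + t)); last lia.
rewrite take_cat size_rep /= ltnNge.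
have -> : 3 * k * 3 <= 3 * (3 * k + t) by lia.
rewrite /= (_ : 3 * (3 * k + t) - 3 * k * 3 = 3 * t); last lia.
rewrite takel_cat ?take_rep // size_rep /=; lia.
Qed.

Lemma occ_split (v : nat -> 'I_3) a m n p : m <= n -> n <= p ->
  occ v a m p = occ v a m n + occ v a n p.
Proof. by move=> H1 H2; rewrite /occ (@big_cat_nat _ _ _ n). Qed.

Lemma occ_le (v : nat -> 'I_3) a m n : occ v a m n <= n - m.
Proof.
rewrite /occ -[n - m]muln1 -sum_nat_const_nat.
by apply: leq_sum => i _; case: (v i == a).
Qed.

Lemma cnt_mono a b n : b <= n -> cnt a b <= cnt a n <= cnt a b + (n - b).
Proof.
move=> H; rewrite /cnt (@occ_split w a 0 b n) //.
have := occ_le w a b n; lia.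
Qed.

Lemma stage n : exists k, Sz k <= n < Sz k.+1.
Proof.
elim: n => [|n [k Hk]]; first by exists 0; rewrite S_succ.
case: (ltnP n.+1 (Sz k.+1)) => H.
  by exists k; lia.
exists k.+1; rewrite (S_succ k.+1); lia.
Qed.

Lemma I3_ind (P : 'I_3 -> Prop) : P l0 -> P l1 -> P l2 -> forall a, P a.
Proof.
move=> H0 H1 H2 [[|[|[|m]]] Hm] //.
- by rewrite (_ : Ordinal Hm = l0) //; apply: val_inj.
- by rewrite (_ : Ordinal Hm = l1) //; apply: val_inj.
- by rewrite (_ : Ordinal Hm = l2) //; apply: val_inj.
Qed.

Lemma bnd n : exists k, [/\ k * k <= n, n < 27 * (k + 1) * (k + 1),
  (forall a, n <= 3 * cnt a n + 6 * k + 4 /\ 3 * cnt a n <= n + 6 * k + 4) &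
  exists a, 3 * cnt a n + 3 * k <= n + 4].
Proof.
have [k Hk] := stage n.
have Hs := S_succ k. have Hg := S_ge k. have Hl := S_le k.+1.
set j := (n - Sz k) %/ 3.
have Hj : j <= 9 * k by rewrite /j; lia.
have Hb : Sz k + 3 * j <= n <= Sz k + 3 * j + 2 by rewrite /j; lia.
have Hm : forall a, cnt a (Sz k + 3 * j) <= cnt a n <= cnt a (Sz k + 3 * j) + (n - (Sz k + 3 * j)).
  move=> a; have := @cnt_mono a (Sz k + 3 * j) n; lia.
have [P0 P1 P2] := count_pre k.
have M0 := Hm l0; have M1 := Hm l1; have M2 := Hm l2.
rewrite !cnt_bd // in M0 M1 M2.
move: P0 P1 P2 M0 M1 M2.
move: (count_mem l0 (pre k)) (count_mem l1 (pre k)) (count_mem l2 (pre k)) => x0 x1 x2.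
move=> P0 P1 P2 M0 M1 M2.
have [Hj1|Hj1] := leqP j (3 * k).
  rewrite take_seg1 // !count_rep /= in M0 M1 M2.
  exists k; split; [lia|lia| apply: I3_ind; split; lia | exists l2; lia].
have [Hj2|Hj2] := leqP j (6 * k).
  have Ej : j = 3 * k + (j - 3 * k) by lia.
  rewrite Ej take_seg2 ?count_cat ?count_rep /= in M0 M1 M2; last lia.
  exists k; split; [lia|lia| apply: I3_ind; split; lia | exists l0; lia].
have Ej : j = 6 * k + (j - 6 * k) by lia.
rewrite Ej take_seg3 ?count_cat ?count_rep /= in M0 M1 M2; last lia.
exists k; split; [lia|lia| apply: I3_ind; split; lia | exists l1; lia].
Qed.


Lemma wap_crit (v : nat -> 'I_3) (q : nat -> nat) (c : 'I_3 -> nat) :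
  (forall i, q i < q i.+1) ->
  (forall a i, 3 * occ v a (q i) (q i.+1) = c a * (q i.+1 - q i)) ->
  weak_abelian_periodic v.
Proof.
move=> Hq Hc; exists q; split => // a.
have key : forall i, rho v a (q i) (q i.+1) = ((c a)%:R / 3%:R)%R.
  move=> i; rewrite /rho; apply/eqP.
  rewrite eqr_div ?pnatr_eq0 //; last by have := Hq i; lia.
  rewrite -!natrM; apply/eqP; congr (GRing.natmul 1 _); have := Hc a i; lia.
by move=> i j; rewrite !key.
Qed.

Lemma sum3 (u : 'I_3) : (u == l0) + (u == l1) + (u == l2) = 1.
Proof. by move: u; apply: I3_ind. Qed.

Lemma occ_sum3 (v : nat -> 'I_3) m n :
  occ v l0 m n + occ v l1 m n + occ v l2 m n = n - m.
Proof.
rewrite /occ -!big_split /= -[n - m]muln1 -sum_nat_const_nat.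
by apply: eq_bigr => i _; apply: sum3.
Qed.

Lemma cnt_occ a m n : m <= n -> occ w a m n = cnt a n - cnt a m.
Proof. move=> H; rewrite /cnt (@occ_split w a 0 m n) //; lia. Qed.

Lemma q1P k : 3 * cnt l1 (Sz k + 3 * k) = Sz k + 3 * k.
Proof.
have [_ P1 _] := count_pre k.
rewrite cnt_bd; last lia.
rewrite take_seg1; last lia. rewrite count_rep /=.
move: P1; move: (count_mem l1 (pre k)) => x; lia.
Qed.

Lemma q0P k : 3 * cnt l0 (Sz k + 3 * (2 * k)) = Sz k + 3 * (2 * k).
Proof.
have [P0 _ _] := count_pre k.
rewrite cnt_bd; last lia.
rewrite take_seg1 ?count_rep /=; last lia.
move: P0; move: (count_mem l0 (pre k)) => x; lia.
Qed.

Lemma q2P k : 3 * cnt l2 (Sz k + 3 * (3 * k + k)) = Sz k + 3 * (3 * k + k).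
Proof.
have [_ _ P2] := count_pre k.
rewrite cnt_bd; last lia.
rewrite take_seg2 ?count_cat ?count_rep /=; last lia.
move: P2; move: (count_mem l2 (pre k)) => x; lia.
Qed.

Lemma wap_from (z : 'I_3) (q : nat -> nat) :
  (forall i, q i < q i.+1) -> (forall i, 3 * cnt z (q i) = q i) ->
  forall i, 3 * occ w z (q i) (q i.+1) = q i.+1 - q i.
Proof.
move=> Hq H i; have := Hq i => Hi.
rewrite cnt_occ; last lia.
have := H i; have := H i.+1; have := @cnt_mono z (q i) (q i.+1); lia.
Qed.

Lemma wap01 : weak_abelian_periodic (identify l0 l1 w).
Proof.
pose q k := Sz k + 3 * (3 * k + k).
have Hq : forall i, q i < q i.+1 by move=> i; rewrite /q S_succ; lia.
have Hz := wap_from Hq q2P.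
apply: (@wap_crit _ q (fun a => if a == l0 then 2 else if a == l1 then 0 else 1)) => //.
have E1 : forall m n, occ (identify l0 l1 w) l1 m n = 0.
  move=> m n; rewrite /occ big1 // => i _; rewrite /identify; move: (w i).
  by apply: I3_ind.
have E2 : forall m n, occ (identify l0 l1 w) l2 m n = occ w l2 m n.
  move=> m n; apply: eq_bigr => i _; rewrite /identify; move: (w i).
  by apply: I3_ind.
apply: I3_ind => i /=.
- have := occ_sum3 (identify l0 l1 w) (q i) (q i.+1); rewrite E1 E2.
  have := Hz i; lia.
- by rewrite E1.
- by rewrite E2 Hz; lia.
Qed.

Lemma wap02 : weak_abelian_periodic (identify l0 l2 w).
Proof.
pose q k := Sz k + 3 * k.
have Hq : forall i, q i < q i.+1 by move=> i; rewrite /q S_succ; lia.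
have Hz := wap_from Hq q1P.
apply: (@wap_crit _ q (fun a => if a == l0 then 2 else if a == l1 then 1 else 0)) => //.
have E1 : forall m n, occ (identify l0 l2 w) l2 m n = 0.
  move=> m n; rewrite /occ big1 // => i _; rewrite /identify; move: (w i).
  by apply: I3_ind.
have E2 : forall m n, occ (identify l0 l2 w) l1 m n = occ w l1 m n.
  move=> m n; apply: eq_bigr => i _; rewrite /identify; move: (w i).
  by apply: I3_ind.
apply: I3_ind => i /=.
- have := occ_sum3 (identify l0 l2 w) (q i) (q i.+1); rewrite E1 E2.
  have := Hz i; lia.
- by rewrite E2 Hz; lia.
- by rewrite E1.
Qed.

Lemma wap12 : weak_abelian_periodic (identify l1 l2 w).
Proof.
pose q k := Sz k + 3 * (2 * k).
have Hq : forall i, q i < q i.+1 by move=> i; rewrite /q S_succ; lia.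
have Hz := wap_from Hq q0P.
apply: (@wap_crit _ q (fun a => if a == l0 then 1 else if a == l1 then 2 else 0)) => //.
have E1 : forall m n, occ (identify l1 l2 w) l2 m n = 0.
  move=> m n; rewrite /occ big1 // => i _; rewrite /identify; move: (w i).
  by apply: I3_ind.
have E2 : forall m n, occ (identify l1 l2 w) l0 m n = occ w l0 m n.
  move=> m n; apply: eq_bigr => i _; rewrite /identify; move: (w i).
  by apply: I3_ind.
apply: I3_ind => i /=.
- by rewrite E2 Hz; lia.
- have := occ_sum3 (identify l1 l2 w) (q i) (q i.+1); rewrite E1 E2.
  have := Hz i; lia.
- by rewrite E1.
Qed.


Lemma p_ge (p : nat -> nat) : (forall i, p i < p i.+1) -> forall i, p 0 + i <= p i.
Proof. move=> H; elim=> [|i IH]; first by rewrite addn0. have := H i; lia. Qed.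

Lemma arith1 T k n : k * k <= n -> n <= T * (k + 1) -> n <= T * (2 * T + 2).
Proof.
move=> H1 H2; case: (leqP k (2 * T + 1)) => Hk.
  apply: (leq_trans H2); apply: leq_mul => //; lia.
have : T * (k + 1) < k * k by nia.
lia.
Qed.

Lemma slope (a : 'I_3) (p : nat -> nat) L O :
  (forall i, p i < p i.+1) -> 0 < L ->
  (forall i, occ w a (p 0) (p i) * L = O * (p i - p 0)) -> 3 * O = L.
Proof.
move=> Hp HL H.
have Hge := p_ge Hp.
set P0 := p 0; set c0 := cnt a P0.
set T := P0 + L * (4 + P0 + 3 * c0) + 6 * L.
case: (eqVneq (3 * O) L) => // Hne; exfalso.
pose i := T * (2 * T + 2) + 1.
have Hi := Hge i; have Hmi := Hp 0.
have := H i; rewrite cnt_occ; last by have := Hge i; lia.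
have [k [Hk1 Hk2 Hk3 _]] := bnd (p i).
have [Ha Hb] := Hk3 a.
have Hm := @cnt_mono a P0 (p i) (leq_trans (leq_addr _ _) Hi).
rewrite -/c0 => Heq.
have Hn : p i <= T * (k + 1).
  case: (ltngtP (3 * O) L) Hne => // Hlt _.
  - nia.
  - nia.
have := arith1 Hk1 Hn; move: Hi; rewrite /i; move: (T * (2 * T + 2)) => M; lia.
Qed.

Lemma not_wap : ~ weak_abelian_periodic w.
Proof.
case=> p [Hp Hr].
have Hge := p_ge Hp.
set L := p 1 - p 0.
have HL : 0 < L by have := Hp 0; rewrite /L; lia.
have Step1 : forall a i, occ w a (p i) (p i.+1) * L = occ w a (p 0) (p 1) * (p i.+1 - p i).
  move=> a i; move/eqP: (Hr a i 0); rewrite /rho.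
  have Hi := Hp i.
  rewrite eqr_div ?pnatr_eq0; last (by have := Hp 0; lia); last by lia.
  by rewrite -!natrM eqr_nat => /eqP.
have Step2 : forall a i, occ w a (p 0) (p i) * L = occ w a (p 0) (p 1) * (p i - p 0).
  move=> a; elim=> [|i IH]; first by rewrite /occ big_geq // subnn muln0.
  rewrite (@occ_split w a (p 0) (p i) (p i.+1)); first last.
  - exact: ltnW.
  - by have := Hge i; lia.
  rewrite mulnDl IH Step1 -mulnDr; congr (_ * _).
  have := Hp i; have := Hge i; lia.
have Sl : forall a, 3 * occ w a (p 0) (p 1) = L.
  by move=> a; apply: (slope Hp HL (Step2 a)).
have Step3 : forall a i, 3 * (cnt a (p i) - cnt a (p 0)) = p i - p 0.
  move=> a i; have := Step2 a i; rewrite cnt_occ; last by have := Hge i; lia.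
  move=> H; apply/eqP; rewrite -(eqn_pmul2r HL); apply/eqP.
  rewrite -mulnA H -(Sl a); move: (occ w a (p 0) (p 1)) (p i - p 0) => O Y; nia.
set P0 := p 0.
pose i := 27 * ((P0 + 5) * (P0 + 5)).
have Hi := Hge i.
have [k [Hk1 Hk2 _ [a Ha]]] := bnd (p i).
have Hk : P0 + 5 <= k.
  case: (leqP (P0 + 5) k) => // Hlt; exfalso.
  have : (k + 1) * (k + 1) <= (P0 + 5) * (P0 + 5) by apply: leq_mul; lia.
  have Hk2' : p i < 27 * ((k + 1) * (k + 1)) by rewrite mulnA.
  move: Hk2' Hi; rewrite /i; move: ((k + 1) * (k + 1)) ((P0 + 5) * (P0 + 5)) => X Y.
  lia.
have := Step3 a i; have := @cnt_mono a P0 (p i) (leq_trans (leq_addr _ _) Hi).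
rewrite -/P0; lia.
Qed.

Theorem proposition4 :
  exists w : nat -> 'I_3,
    weak_abelian_periodic (identify l0 l1 w) /\
    weak_abelian_periodic (identify l0 l2 w) /\
    weak_abelian_periodic (identify l1 l2 w) /\
    ~ weak_abelian_periodic w.
Proof. exists w; split; [exact: wap01 | split; [exact: wap02 | split; [exact: wap12 | exact: not_wap]]]. Qed.
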